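(* Let $q \ge 2$, $n \ge 1$ and $k \ge 0$ be integers, and let $\alpha_{i,j}$ be as defined in the context. Then $$\alpha_{k+2,k+1} = (k+1)(2q-1) - (q-1)n.$$
   Context: Let $g(y) = \dfrac{y(1-y)}{(1+(q-1)y)^2}$, a formal power series in $y$ with $g(0)=0$ and $g'(0) = 1 \ne 0$. For each integer $j \ge 0$, the formal power series $y^j (1+(q-1)y)^{-n}$ can be uniquely expanded as $\sum_{i \ge 0} \alpha_{i,j}\, g(y)^i$; this defines the real numbers $\alpha_{i,j}$. (Equivalently, these are the coefficients in $c_i = \sum_{j \le i} \alpha_{i,j} A_j$ relating the weight distribution $A_0,\dots,A_n$ of a pure state to the coefficients $c_i$ of its expansion $A(x,y)=\sum_{i=0}^{\lfloor n/2\rfloor} c_i (x+(q-1)y)^{n-2i}(y(x-y))^i$.) *)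

(* Defs.v *)
From HB Require Import structures.
From mathcomp Require Import all_boot all_order all_algebra.
Set Implicit Arguments. Unset Strict Implicit. Unset Printing Implicit Defensive.
Import Order.TTheory GRing.Theory Num.Theory.
Local Open Scope ring_scope.

(* Formal power series over R, represented by their coefficient sequences:
   f m is the coefficient of y^m. *)
Definition fps (R : nzRingType) := nat -> R.

Section FPS.
Variable R : comNzRingType.

Definition fps_one : fps R := fun m => (m == 0)%N%:R.
Definition fps_X : fps R := fun m => (m == 1)%N%:R.
Definition fps_mul (f g : fps R) : fps R :=
  fun m => \sum_(i < m.+1) f i * g (m - i)%N.
Definition fps_exp (f : fps R) (e : nat) : fps R := iter e (fps_mul f) fps_one.

(* (1 + (q-1) y)^{-1} = sum_m (-(q-1))^m y^m *)
Definition inv_lin (q : nat) : fps R := fun m => (- (q%:R - 1)) ^+ m.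

(* g(y) = y (1 - y) / (1 + (q-1) y)^2 *)
Definition gser (q : nat) : fps R :=
  fps_mul (fun m => (m == 1)%N%:R - (m == 2)%N%:R) (fps_exp (inv_lin q) 2).

Definition fser (q n j : nat) : fps R :=
  fps_mul (fps_exp fps_X j) (fps_exp (inv_lin q) n).

(* The formal series sum_{i>=0} a_i g^i, for g with g(0) = 0
   (so only i <= m contribute to the coefficient of y^m). *)
Definition comp_sum (a : nat -> R) (g : fps R) : fps R :=
  fun m => \sum_(i < m.+1) a i * fps_exp g i m.

Definition is_expansion (g f : fps R) (a : nat -> R) : Prop :=
  forall m, f m = comp_sum a g m.

(* alpha_{.,j} for given q, n: the coefficient family of the expansion of
   y^j (1+(q-1)y)^{-n} in powers of g(y). *)
Definition is_alpha (q n j : nat) (a : nat -> R) : Prop :=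
  is_expansion (gser q) (fser q n j) a.
End FPS.

(* Main.v *)
Require Import Defs.
From HB Require Import structures.
From mathcomp Require Import all_boot all_order all_algebra ring zify.
Import Order.TTheory GRing.Theory Num.Theory.
Local Open Scope ring_scope.

Section S.
Variable R : comNzRingType.
Implicit Types f g h : fps R.

Lemma mul0E f g : fps_mul f g 0 = f 0%N * g 0%N.
Proof. by rewrite /fps_mul big_ord_recr big_ord0 /= add0r. Qed.
Lemma mul1E f g : fps_mul f g 1 = f 0%N * g 1%N + f 1%N * g 0%N.
Proof. by rewrite /fps_mul !big_ord_recr big_ord0 /= add0r. Qed.
Lemma mul2E f g : fps_mul f g 2 = f 0%N * g 2%N + f 1%N * g 1%N + f 2%N * g 0%N.
Proof. by rewrite /fps_mul !big_ord_recr big_ord0 /= add0r. Qed.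

Lemma expS g i : fps_exp g i.+1 = fps_mul g (fps_exp g i).
Proof. by []. Qed.

Lemma exp_lt g : g 0%N = 0 -> forall i m, (m < i)%N -> fps_exp g i m = 0.
Proof.
move=> g0; elim=> [|i IH] m //= hm.
rewrite /fps_mul big1 // => [[t ht]] _ /=.
case: t ht => [|t] ht; first by rewrite g0 mul0r.
by rewrite IH ?mulr0 //; lia.
Qed.

Lemma exp_diag g : g 0%N = 0 -> g 1%N = 1 -> forall i, fps_exp g i i = 1.
Proof.
move=> g0 g1; elim=> [|i IH]; first by rewrite /= /fps_one.
rewrite expS /fps_mul big_ord_recl big_ord_recl /= g0 mul0r add0r g1 mul1r.
rewrite subn1 /= IH big1 ?addr0 // => [[t ht]] _ /=.
by rewrite (exp_lt _ g0) ?mulr0 //; rewrite /bump /=; lia.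
Qed.

Lemma exp_sub g : g 0%N = 0 -> g 1%N = 1 -> forall i, fps_exp g i i.+1 = i%:R * g 2%N.
Proof.
move=> g0 g1; elim=> [|i IH]; first by rewrite /= /fps_one mul0r.
rewrite expS /fps_mul big_ord_recl big_ord_recl big_ord_recl /= g0 mul0r add0r g1 mul1r.
rewrite /bump /=.
have -> : (i.+2 - (1 + 0).+1 = i)%N by lia.
have -> : (i.+2 - 1 = i.+1)%N by lia.
rewrite IH (exp_diag _ g0 g1) big1 ?addr0; last first.
  move=> [t ht] _ /=; rewrite /bump /=.
  by rewrite (exp_lt _ g0) ?mulr0 //; lia.
by rewrite mulr1 mulrSr mulrDl mul1r.
Qed.

Lemma pow01 h : h 0%N = 1 -> forall n, fps_exp h n 0 = 1 /\ fps_exp h n 1 = n%:R * h 1%N.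
Proof.
move=> h0; elim=> [|n [IH0 IH1]]; first by rewrite /= /fps_one /= mul0r.
rewrite expS mul0E mul1E IH0 IH1 h0 mulr1 mul1r; split=> //; rewrite mulrSr; ring.
Qed.

Lemma expX j m : fps_exp (fps_X R) j m = (m == j)%:R.
Proof.
elim: j m => [|j IH] m; first by rewrite /= /fps_one.
rewrite expS /fps_mul big_ord_recl /= {1}/fps_X /= mul0r add0r.
case: m => [|m]; first by rewrite big_ord0.
rewrite big_ord_recl /= {1}/fps_X /= mul1r big1 ?addr0.
  by rewrite subn1 IH.
by move=> [t ht] _; rewrite /fps_X /bump /= mul0r.

Qed.

Lemma fser_lt q n j m : (m < j)%N -> fser R q n j m = 0.
Proof.
move=> hm; rewrite /fser /fps_mul big1 // => [[t ht]] _ /=.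
rewrite expX. have -> : (t == j) = false by apply/negP => /eqP e; lia. by rewrite mul0r.
Qed.

Lemma fser_ge q n j m : fser R q n j (j + m)%N = fps_exp (inv_lin R q) n m.
Proof.
rewrite /fser /fps_mul (bigD1 (Ordinal (ltn_addr m (ltnSn j)))) //= big1.
  by rewrite expX eqxx mul1r addr0 addKn.
move=> [t ht] /= hne; rewrite expX.
have -> : (t == j) = false by apply/negbTE; apply: contra hne => /eqP e; apply/eqP/val_inj.
by rewrite mul0r.
Qed.

Lemma gser012 q : gser R q 0 = 0 /\ gser R q 1 = 1 /\
  gser R q 2 = - (2 * (q%:R - 1)) - 1.
Proof.
have L0 : inv_lin R q 0 = 1 by rewrite /inv_lin expr0.
have [P0 P1] := pow01 _ L0 2.
rewrite /gser mul0E mul1E mul2E P0 P1 /inv_lin expr1 /=.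
split; first by rewrite subr0 mul0r.
split; first by rewrite !subr0 mul0r add0r mul1r.
rewrite !subr0 sub0r !mul0r !add0r mul1r. ring.
Qed.

Fixpoint build (f : nat -> R) (g : fps R) (m : nat) : seq R :=
  if m is m'.+1 then
    rcons (build f g m') (f m' - \sum_(i < m') (build f g m')`_i * fps_exp g i m')
  else [::].

Lemma size_build f g m : size (build f g m) = m.
Proof. by elim: m => //= m IH; rewrite size_rcons IH. Qed.

Lemma nth_build f g i m : (i < m)%N -> (build f g m)`_i = (build f g i.+1)`_i.
Proof.
elim: m => // m IH hi.
rewrite /= nth_rcons size_build.
case: ltnP => h; first by rewrite IH.
have e : i = m by lia.
by subst i; rewrite eqxx /= nth_rcons size_build ltnn eqxx.
Qed.

Lemma expansion_exists g f : g 0%N = 0 -> g 1%N = 1 ->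
  exists a, is_expansion g f a.
Proof.
move=> g0 g1; exists (fun i => (build f g i.+1)`_i) => m.
rewrite /comp_sum big_ord_recr /= (exp_diag _ g0 g1) mulr1.
rewrite nth_rcons size_build ltnn eqxx.
rewrite -[X in _ = X + _]/(\sum_(i < m) (build f g i.+1)`_i * fps_exp g i m).
rewrite (eq_bigr (fun i : 'I_m => (build f g m)`_i * fps_exp g i m)); last by move=> i _; rewrite (@nth_build f g i m (ltn_ord i)).
by rewrite addrC subrK.
Qed.

End S.

Theorem lemma2 (R : realFieldType) (q n k : nat)
  (hq : (2 <= q)%N) (hn : (1 <= n)%N) :
  (exists a : nat -> R, is_alpha q n k.+1 a) /\
  (forall a : nat -> R, is_alpha q n k.+1 a ->
     a k.+2 = k.+1%:R * (2 * q%:R - 1) - (q%:R - 1) * n%:R).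
Proof.
have [g0 [g1 g2]] := gser012 R q.
split; first exact: expansion_exists.
move=> a ha.
have key : forall m, fser R q n k.+1 m =
   \sum_(i < m) a i * fps_exp (gser R q) i m + a m.
  by move=> m; rewrite ha /comp_sum big_ord_recr /= (exp_diag _ _ g0 g1) mulr1.
have Z : forall m, (m <= k)%N -> forall i, (i <= m)%N -> a i = 0.
  elim=> [|m IH] hm i hi.
    have -> : i = 0%N by lia.
    by have := key 0%N; rewrite big_ord0 add0r fser_lt // => <-.
  case: (ltnP i m.+1) => h; first by apply: IH; lia.
  have -> : i = m.+1 by lia.
  have := key m.+1; rewrite fser_lt; last by lia.
  rewrite big1 ?add0r // => [[t ht]] _ /=; rewrite (IH _ t) ?mul0r //; lia.
have L0 : inv_lin R q 0 = 1 by rewrite /inv_lin expr0.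
have [P0 P1] := pow01 _ _ L0 n.
have a1 : a k.+1 = 1.
  have F := fser_ge R q n k.+1 0; rewrite addn0 P0 in F.
  have := key k.+1; rewrite F.
  rewrite big1 ?add0r // => [[t ht]] _ /=; rewrite (Z k _ t) ?mul0r //; lia.
have F := fser_ge R q n k.+1 1; rewrite addn1 P1 in F.
have := key k.+2; rewrite F.
rewrite big_ord_recr /= big1 ?add0r; last first.
  move=> [t ht] _ /=; rewrite (Z k _ t) ?mul0r //; lia.
rewrite a1 mul1r -expS (exp_sub _ _ g0 g1) g2 /inv_lin expr1 => e.
have -> : a k.+2 = n%:R * - (q%:R - 1) - k.+1%:R * (- (2 * (q%:R - 1)) - 1).
  by rewrite e addrC addKr.
ring.
Qed.
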